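(* If $\phi$ is an automorphism of $\infty\mathbin{\hat{*}} I_\infty$ which fixes each maximal antichain setwise, then $\phi$ is the identity.
   Context: A digraph is a set with an irreflexive asymmetric edge relation $\to$; $x\perp y$ means no edge between $x,y$. A digraph is complete multipartite if $\perp$ (taken reflexively) is an equivalence relation; its classes are the maximal antichains. Let $\mathcal C$ be the class of finite complete multipartite digraphs with the parity property: for every two distinct maximal antichains $A,B$, distinct $a,a'\in A$ and distinct $b,b'\in B$, there is an even number of edges pointing from $\{a,a'\}$ to $\{b,b'\}$. $\mathcal C$ is an amalgamation class, and $\infty\mathbin{\hat{*}} I_\infty$ denotes its Fraïssé limit, the countable homogeneous digraph whose finite induced substructures are exactly the members of $\mathcal C$. *)

(* Defs.v *)
From mathcomp Require Import all_boot.
Set Implicit Arguments. Unset Strict Implicit. Unset Printing Implicit Defensive.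

Definition is_digraph (V : Type) (e : rel V) : Prop :=
  (forall x, ~~ e x x) /\ (forall x y, e x y -> ~~ e y x).

Definition perp (V : Type) (e : rel V) (x y : V) : bool := ~~ e x y && ~~ e y x.

(* Complete multipartite: _|_ (taken reflexively) is an equivalence relation;
   it is reflexive and symmetric by definition, so it remains to ask transitivity. *)
Definition complete_multipartite (V : Type) (e : rel V) : Prop :=
  forall x y z, perp e x y -> perp e y z -> perp e x z.

Definition edges_between (V : Type) (e : rel V) (a a' b b' : V) : nat :=
  e a b + e a b' + e a' b + e a' b'.

(* Parity property: for two distinct maximal antichains A, B (= two distinct
   _|_-classes), distinct a,a' in A and distinct b,b' in B, an even number of
   edges point from {a,a'} to {b,b'}. *)
Definition parity_property (V : eqType) (e : rel V) : Prop :=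
  forall a a' b b' : V,
    a != a' -> b != b' -> perp e a a' -> perp e b b' -> ~~ perp e a b ->
    ~~ odd (edges_between e a a' b b').

Definition in_C (T : finType) (e : rel T) : Prop :=
  [/\ is_digraph e, complete_multipartite e & parity_property e].

Definition pullback (V : Type) (e : rel V) (n : nat) (f : 'I_n -> V) : rel 'I_n :=
  fun i j => e (f i) (f j).

Definition countable_type (V : Type) : Prop :=
  exists c : V -> nat, injective c.

Definition is_automorphism (V : Type) (e : rel V) (phi : V -> V) : Prop :=
  bijective phi /\ forall x y, e (phi x) (phi y) = e x y.

Definition age_is_C (V : Type) (e : rel V) : Prop :=
  (forall (n : nat) (f : 'I_n -> V), injective f -> in_C (pullback e f)) /\
  (forall (n : nat) (r : rel 'I_n), in_C r ->
     exists f : 'I_n -> V, injective f /\ forall i j, e (f i) (f j) = r i j).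

Definition homogeneous (V : Type) (e : rel V) : Prop :=
  forall (n : nat) (f g : 'I_n -> V), injective f -> injective g ->
    (forall i j, e (f i) (f j) = e (g i) (g j)) ->
    exists phi, is_automorphism e phi /\ forall i, phi (f i) = g i.

Definition is_fraisse_limit_C (V : Type) (e : rel V) : Prop :=
  [/\ countable_type V, is_digraph e, homogeneous e & age_is_C e].

Definition antichain (V : Type) (e : rel V) (A : V -> Prop) : Prop :=
  forall x y, A x -> A y -> ~~ e x y.

Definition maximal_antichain (V : Type) (e : rel V) (A : V -> Prop) : Prop :=
  antichain e A /\
  forall B : V -> Prop, antichain e B -> (forall x, A x -> B x) -> forall x, B x -> A x.

Definition fixes_setwise (V : Type) (phi : V -> V) (A : V -> Prop) : Prop :=
  (forall x, A x -> A (phi x)) /\ (forall y, A y -> exists x, A x /\ phi x = y).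

(* Main.v *)
Require Import Defs.
From mathcomp Require Import all_boot.
From Stdlib Require Import Classical.

Lemma perp_refl (V : Type) (e : rel V) x : is_digraph e -> perp e x x.
Proof. by case=> Hi _; rewrite /perp Hi. Qed.
Arguments perp_refl {V e} x.

Lemma perp_sym (V : Type) (e : rel V) x y : perp e x y = perp e y x.
Proof. by rewrite /perp andbC. Qed.

Lemma perp_trans (V : Type) (e : rel V) : is_digraph e -> age_is_C e ->
  forall x y z, perp e x y -> perp e y z -> perp e x z.
Proof.
move=> Hd [Hage _] x y z Hxy Hyz.
case: (classic (x = y)) => [->//|Nxy].
case: (classic (y = z)) => [<-//|Nyz].
case: (classic (x = z)) => [<-|Nxz]; first exact: perp_refl.
pose f := fun i : 'I_3 => nth x [:: x; y; z] i.
have finj : injective f.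
  move=> [[|[|[|i]]] Hi] [[|[|[|j]]] Hj] //= H;
  try (by apply: val_inj); cbv [f] in H; simpl in H; exfalso; congruence.
have [_ Hm _] := Hage _ f finj.
exact: (Hm (@Ordinal 3 0 isT) (@Ordinal 3 1 isT) (@Ordinal 3 2 isT)).
Qed.
Arguments perp_trans {V e}.

Lemma parity_V (V : Type) (e : rel V) : is_digraph e -> age_is_C e ->
  forall a a' b b', a <> a' -> b <> b' -> perp e a a' -> perp e b b' ->
  ~~ perp e a b -> ~~ odd (edges_between e a a' b b').
Proof.
move=> Hd Hage a a' b b' Na Nb Pa Pb Pab.
have Hne : forall u v, perp e a u -> ~~ perp e a v -> u <> v.
  move=> u v Hu Hv Huv; subst v; by rewrite Hu in Hv.
have Pab' : ~~ perp e a b'.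
  apply/negP=> H; move/negP: Pab; apply.
  by apply: (perp_trans Hd Hage a b' b H); rewrite perp_sym.
have N1 := Hne a b (perp_refl _ Hd) Pab.
have N2 := Hne a b' (perp_refl _ Hd) Pab'.
have N3 := Hne a' b Pa Pab.
have N4 := Hne a' b' Pa Pab'.
pose f := fun i : 'I_4 => nth a [:: a; a'; b; b'] i.
have finj : injective f.
  move=> [[|[|[|[|i]]]] Hi] [[|[|[|[|j]]]] Hj] //= H;
  try (by apply: val_inj); cbv [f] in H; simpl in H; exfalso; congruence.
have [_ _ Hp] := (proj1 Hage) _ f finj.
exact: (Hp (@Ordinal 4 0 isT) (@Ordinal 4 1 isT) (@Ordinal 4 2 isT) (@Ordinal 4 3 isT)).
Qed.

Lemma widen_neq_max n (i : 'I_n) : (widen_ord (leqnSn n) i == ord_max) = false.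
Proof. by apply/negbTE; rewrite -val_eqE /= neq_ltn ltn_ord. Qed.

Lemma extend (V : Type) (e : rel V) : homogeneous e -> age_is_C e ->
  forall n (g : 'I_n -> V) (r : rel 'I_n.+1), injective g ->
  (forall i j, perp e (g i) (g j)) -> in_C r ->
  (forall i j : 'I_n, r (widen_ord (leqnSn n) i) (widen_ord (leqnSn n) j) = false) ->
  exists b, (forall i, e (g i) b = r (widen_ord (leqnSn n) i) ord_max /\
                      e b (g i) = r ord_max (widen_ord (leqnSn n) i)) /\
            (forall i, b <> g i).
Proof.
move=> Hh [_ Hemb] n g r ginj gperp rC rA.
have [F [Finj FE]] := Hemb _ r rC.
pose f := fun i : 'I_n => F (widen_ord (leqnSn n) i).
have finj : injective f.
  move=> i j /Finj /(congr1 val) /= H; exact: val_inj.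
have [psi [[psibij psie] psif]] := Hh n f g finj ginj
   (fun i j => ltac:(rewrite /f FE rA; have := gperp i j;
                      by rewrite /perp => /andP [/negbTE -> _])).
exists (psi (F ord_max)); split.
  by move=> i; rewrite -psif !psie /f !FE.
move=> i; rewrite -psif => /(bij_inj psibij) /Finj /(congr1 val) /= H.
by have := ltn_ord i; rewrite -H ltnn.
Qed.
Arguments extend {V e}.

Definition rv n (vals : nat -> bool) : rel 'I_n.+1 :=
  fun i j => if i == ord_max then (j != ord_max) && ~~ vals j
             else (j == ord_max) && vals i.

Lemma rv_perp n vals (i j : 'I_n.+1) :
  perp (rv n vals) i j = ((i == ord_max) == (j == ord_max)).
Proof.
rewrite /perp /rv; case: (i =P ord_max) => Hi; case: (j =P ord_max) => Hj /=;
  subst; rewrite ?eqxx //=.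
- by case: (vals j).
- by case: (vals i).
Qed.

Lemma rv_C n vals : in_C (@rv n vals).
Proof.
split.
- split.
  + by move=> i; rewrite /rv; case: (i =P ord_max) => [->|]; rewrite ?eqxx.
  + move=> i j; rewrite /rv; case: (i =P ord_max) => Hi; case: (j =P ord_max) => Hj /=;
      subst; rewrite ?eqxx //=.
    by rewrite negbK.
- by move=> x y z; rewrite !rv_perp => /eqP -> /eqP ->.
- move=> a a' b b'; rewrite !rv_perp; case: (a =P ord_max) => Ea; case: (a' =P ord_max) => Ea';
    case: (b =P ord_max) => Eb; case: (b' =P ord_max) => Eb' //=; rewrite ?Ea ?Ea' ?Eb ?Eb' ?eqxx //.
Qed.

Lemma ext_vals (V : Type) (e : rel V) : homogeneous e -> age_is_C e ->
  forall n (g : 'I_n -> V) (vals : nat -> bool), injective g ->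
  (forall i j, perp e (g i) (g j)) ->
  exists b, forall i, e (g i) b = vals i /\ e b (g i) = ~~ vals i.
Proof.
move=> Hh Ha n g vals ginj gp.
have [|b [Hb _]] := extend Hh Ha n g (rv n vals) ginj gp (rv_C n vals).
  by move=> i j; rewrite /rv !widen_neq_max.
exists b => i; have [-> ->] := Hb i.
by rewrite /rv widen_neq_max eqxx.
Qed.

Lemma ext_new (V : Type) (e : rel V) : homogeneous e -> age_is_C e ->
  forall n (g : 'I_n -> V), injective g ->
  (forall i j, perp e (g i) (g j)) ->
  exists z, forall i, perp e (g i) z /\ z <> g i.
Proof.
move=> Hh Ha n g ginj gp.
have rC : in_C (fun _ _ : 'I_n.+1 => false).
  by split; [split|move=> *; rewrite /perp|move=> *; rewrite /perp].
have [|b [Hb Hn]] := extend Hh Ha n g _ ginj gp rC; first by [].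
exists b => i; have [E1 E2] := Hb i; split; last exact: Hn.
by rewrite /perp E1 E2.
Qed.
Arguments ext_new {V e}.
Arguments ext_vals {V e}.
Arguments parity_V {V e}.

Theorem proposition4p3 (V : Type) (e : rel V) (phi : V -> V) :
  is_fraisse_limit_C e ->
  is_automorphism e phi ->
  (forall A : V -> Prop, maximal_antichain e A -> fixes_setwise phi A) ->
  forall x, phi x = x.
Proof.
move=> [_ Hd Hh Ha] [phib phie] Hfix.
have phiinj : injective phi := bij_inj phib.
have tr := perp_trans Hd Ha.
have Hpv : forall v, perp e v (phi v).
  move=> v.
  have Hmax : maximal_antichain e (fun u => perp e v u).
    split.
      move=> u u' Hu Hu'.
      have : perp e u u' by apply: (tr u v u'); rewrite // perp_sym.
      by case/andP.
    move=> B HB Hsub u Hu; rewrite /perp; apply/andP; split.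
      by apply: HB => //; apply: Hsub; exact: perp_refl.
    by apply: HB => //; apply: Hsub; exact: perp_refl.
  have [H1 _] := Hfix _ Hmax.
  exact: H1 v (perp_refl v Hd).
move=> x; apply: NNPP => Hxy.
have inA : forall a, perp e x a -> perp e x (phi a).
  by move=> a Ha'; apply: (tr x a (phi a)).
have K : forall b0 a1 a2, perp e x a1 -> perp e x a2 -> ~~ perp e x b0 ->
   ~~ odd (e (phi a1) b0 + e a1 b0 + (e (phi a2) b0 + e a2 b0)).
  move=> b0 a1 a2 H1 H2 Hb.
  have FE : forall a, e (phi a) (phi b0) = e a b0 by move=> a; rewrite phie.
  case: (classic (b0 = phi b0)) => [Eb|Nb].
    rewrite -[e a1 b0]FE -[e a2 b0]FE -Eb.
    by rewrite !addnn -doubleD odd_double.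
  case: (classic (a1 = a2)) => [<-|Na].
    by rewrite addnn odd_double.
  have Na' : phi a1 <> phi a2 by move=> /phiinj.
  have P12 : perp e (phi a1) (phi a2).
    by apply: (tr _ x); [rewrite perp_sym|]; apply: inA.
  have Pn : ~~ perp e (phi a1) b0.
    apply/negP => H; move/negP: Hb; apply.
    exact: (tr x (phi a1) b0 (inA _ H1) H).
  have := parity_V Hd Ha _ _ _ _ Na' Nb P12 (Hpv b0) Pn.
  by rewrite /edges_between !FE addnA.
have Pxpx := Hpv x.
have nb : forall (n : nat) (g : 'I_n.+1 -> V) (vals : nat -> bool) b,
    g ord0 = x -> (forall i, e (g i) b = vals i /\ e b (g i) = ~~ vals i) ->
    ~~ perp e x b.
  move=> n g vals b Hg Hb; have [E1 E2] := Hb ord0.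
  rewrite Hg in E1 E2.
  by rewrite /perp E1 E2; case: (vals _).
case: (classic (phi (phi x) = x)) => [Hsw|Nsw].
-
  pose g2 := fun i : 'I_2 => nth x [:: x; phi x] i.
  have g2inj : injective g2.
    move=> [[|[|i]] Hi] [[|[|j]] Hj] //= H;
    try (by apply: val_inj); cbv [g2] in H; simpl in H; exfalso; congruence.
  have g2x : forall i, perp e x (g2 i).
    by move=> [[|[|i]] Hi] //=; rewrite ?perp_refl.
  have g2p : forall i j, perp e (g2 i) (g2 j).
    by move=> i j; apply: (tr _ x); [rewrite perp_sym|]; apply: g2x.
  have [z Hz] := ext_new Hh Ha 2 g2 g2inj g2p.
  have [Pxz Nzx] := Hz (@Ordinal 2 0 isT).
  have [_ Nzy] := Hz (@Ordinal 2 1 isT).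
  simpl in Pxz, Nzx, Nzy.
  case: (classic (phi z = z)) => [Ez|Nz].
  + have [b Hb] := ext_vals Hh Ha 2 g2 (fun k => k == 0) g2inj g2p.
    have [E0 _] := Hb (@Ordinal 2 0 isT).
    have [E1 _] := Hb (@Ordinal 2 1 isT).
    simpl in E0, E1.
    have := K b x z (perp_refl x Hd) Pxz (nb 1 g2 (fun k => k == 0) b erefl Hb).
    by rewrite Ez E0 E1; case: (e z b).
  + have Nwx : phi z <> x by rewrite -{1}Hsw => /phiinj.
    have Nwy : phi z <> phi x by move=> /phiinj.
    pose g4 := fun i : 'I_4 => nth x [:: x; phi x; z; phi z] i.
    have g4inj : injective g4.
      move=> [[|[|[|[|i]]]] Hi] [[|[|[|[|j]]]] Hj] //= H;
      try (by apply: val_inj); cbv [g4] in H; simpl in H; exfalso; congruence.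
    have g4x : forall i, perp e x (g4 i).
      by move=> [[|[|[|[|i]]]] Hi] //=; rewrite ?perp_refl //; apply: inA.
    have g4p : forall i j, perp e (g4 i) (g4 j).
      by move=> i j; apply: (tr _ x); [rewrite perp_sym|]; apply: g4x.
    have [b Hb] := ext_vals Hh Ha 4 g4 (fun k => k == 0) g4inj g4p.
    have [E0 _] := Hb (@Ordinal 4 0 isT).
    have [E1 _] := Hb (@Ordinal 4 1 isT).
    have [E2 _] := Hb (@Ordinal 4 2 isT).
    have [E3 _] := Hb (@Ordinal 4 3 isT).
    simpl in E0, E1, E2, E3.
    have := K b x z (perp_refl x Hd) Pxz (nb 3 g4 (fun k => k == 0) b erefl Hb).
    by rewrite E0 E1 E2 E3.
-
  have Pxw : perp e x (phi (phi x)) by apply: inA.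
  pose g2 := fun i : 'I_2 => nth x [:: x; phi (phi x)] i.
  have g2inj : injective g2.
    move=> [[|[|i]] Hi] [[|[|j]] Hj] //= H;
    try (by apply: val_inj); cbv [g2] in H; simpl in H; exfalso; congruence.
  have g2x : forall i, perp e x (g2 i).
    by move=> [[|[|i]] Hi] //=; rewrite ?perp_refl.
  have g2p : forall i j, perp e (g2 i) (g2 j).
    by move=> i j; apply: (tr _ x); [rewrite perp_sym|]; apply: g2x.
  have [b Hb] := ext_vals Hh Ha 2 g2 (fun k => k == 0) g2inj g2p.
  have [E0 _] := Hb (@Ordinal 2 0 isT).
  have [E1 _] := Hb (@Ordinal 2 1 isT).
  simpl in E0, E1.
  have := K b x (phi x) (perp_refl x Hd) Pxpx (nb 1 g2 (fun k => k == 0) b erefl Hb).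
  by rewrite E0 E1; case: (e (phi x) b).
Qed.
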